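(* Let $M_n$ be the system $\dot x=Ax+Bu$, $y=Cx$ with $x\in\mathbb{R}^n$, $y\in\mathbb{R}^p$, initial set $X_0(M_n)\subseteq\mathbb{R}^n$ and input set $\mathsf U\subseteq\mathbb{R}^m$, and let $M_k$ be the system $\dot x_r=A_rx_r+B_ru$, $y_r=C_rx_r$ with $x_r\in\mathbb{R}^k$, $y_r\in\mathbb{R}^p$, initial set $X_0(M_k)=\{Tx_0: x_0\in X_0(M_n)\}$ for a linear map $T:\mathbb{R}^n\to\mathbb{R}^k$, and the same input set. Let $\delta=(\delta_1,\dots,\delta_p)$ with $\delta_j>0$ be such that for every $x_0\in X_0(M_n)$, every admissible input $u$ and every $t\ge0$, the output $y$ of $M_n$ from $x(0)=x_0$ and the output $y_r$ of $M_k$ from $x_r(0)=Tx_0$ under the same $u$ satisfy $|y^j(t)-y_r^j(t)|\le\delta_j$ for $1\le j\le p$. Let $a\in\mathbb{R}^p$, $R>0$, $Q\in\mathbb{R}^{p\times p}$ symmetric positive definite, and $S(M_n)=\{y\in\mathbb{R}^p:(y-a)^TQ(y-a)\le R^2\}$. Let $E=[l_1,\dots,l_p]$ be an orthogonal matrix with $E^TQE=\mathrm{diag}(\lambda_1,\dots,\lambda_p)$ (so $\lambda_i>0$ are the eigenvalues of $Q$ with eigenvectors $l_i$), write $l_i=(\gamma_{1i},\dots,\gamma_{pi})^T$, and set \[ \Delta_R=\sqrt{\sum_{i=1}^p\lambda_i\Big(\sum_{j=1}^p|\gamma_{ji}|\delta_j\Big)^2}. \] Assume $\Delta_R\le R$,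 and define $S(M_k)=\{y_r:(y_r-a)^TQ(y_r-a)\le(R-\Delta_R)^2\}$ and $U(M_k)=\{y_r:(y_r-a)^TQ(y_r-a)>(R+\Delta_R)^2\}$. Then for every $t_f\ge0$: (i) if $R_{[0,t_f]}(M_k)\cap(\mathbb{R}^p\setminus S(M_k))=\emptyset$ then $R_{[0,t_f]}(M_n)\cap(\mathbb{R}^p\setminus S(M_n))=\emptyset$ (i.e. $M_n$ is safe); (ii) if $R_{[0,t_f]}(M_k)\cap U(M_k)\ne\emptyset$ then $R_{[0,t_f]}(M_n)\cap(\mathbb{R}^p\setminus S(M_n))\ne\emptyset$ (i.e. $M_n$ is unsafe).
   Context: Admissible inputs are measurable functions $u:[0,\infty)\to\mathbb{R}^m$ with $u(t)\in\mathsf U$ for all $t$. For a system $M$ with initial set $X_0(M)$, the output reach set over $[0,t_f]$ is $R_{[0,t_f]}(M)=\{y(t): t\in[0,t_f],\ y\text{ the output of }M\text{ from some initial state in }X_0(M)\text{ under some admissible input}\}$. $y^j(t)$ denotes the $j$-th component of $y(t)$. *)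

(* Defs.v *)
From HB Require Import structures.
From mathcomp Require Import all_boot all_order all_algebra.
From mathcomp Require Import all_classical all_reals all_analysis.
Set Implicit Arguments. Unset Strict Implicit. Unset Printing Implicit Defensive.
Import Order.TTheory GRing.Theory Num.Theory.
Local Open Scope classical_set_scope.
Local Open Scope ring_scope.

Section LinSys.
Variable R : realType.

(* Admissible input: measurable on [0,oo) componentwise, valued in U for all
   t >= 0, and locally integrable (integrable on every [0,t]), so that
   Caratheodory solutions of the linear ODE exist. *)
Definition admissible (m : nat) (U : set 'cV[R]_m) (u : R -> 'cV[R]_m) : Prop :=
  (forall t, 0 <= t -> U (u t)) /\
  (forall i : 'I_m, measurable_fun (`[0%R, +oo[ : set R) (fun t : R => u t i 0)) /\
  (forall i : 'I_m, forall t, 0 <= t ->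
      (@lebesgue_measure R).-integrable `[0%R, t] (fun s => (u s i 0)%:E)).

Definition is_solution (n m : nat) (A : 'M[R]_n) (B : 'M[R]_(n, m))
    (x0 : 'cV[R]_n) (u : R -> 'cV[R]_m) (x : R -> 'cV[R]_n) : Prop :=
  forall t, 0 <= t -> forall i : 'I_n,
    (@lebesgue_measure R).-integrable `[0%R, t]
        (fun s => ((A *m x s + B *m u s) i 0)%:E) /\
    x t i 0 = x0 i 0 + Rintegral (@lebesgue_measure R) `[0%R, t]
                          (fun s => (A *m x s + B *m u s) i 0).

Definition reach_set (n m p : nat) (A : 'M[R]_n) (B : 'M[R]_(n, m))
    (C : 'M[R]_(p, n)) (X0 : set 'cV[R]_n) (U : set 'cV[R]_m) (tf : R)
    : set 'cV[R]_p :=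
  [set y | exists x0 u x t, [/\ X0 x0, admissible U u, is_solution A B x0 u x,
                                0 <= t <= tf & y = C *m x t]].

Definition qform (p : nat) (Q : 'M[R]_p) (a y : 'cV[R]_p) : R :=
  (((y - a)^T *m Q *m (y - a)) 0 0).

End LinSys.

(* Main.v *)
Require Import Defs.
From HB Require Import structures.
From mathcomp Require Import all_boot all_order all_algebra.
From mathcomp Require Import all_classical all_reals all_analysis.
From mathcomp Require Import measurable_realfun.
From mathcomp Require Import ring lra.
Import Order.TTheory GRing.Theory Num.Theory.
Import numFieldNormedType.Exports.
Local Open Scope classical_set_scope.
Local Open Scope ring_scope.
Set Implicit Arguments. Unset Strict Implicit. Unset Printing Implicit Defensive.

Section Aux.
Context {R : realType}.
Notation mu := (@lebesgue_measure R).

Lemma mu_itv0 (t : R) : 0 <= t -> mu `[0, t] = t%:E.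
Proof.
move=> t0; rewrite lebesgue_measure_itv/= lte_fin.
case: ltP => [t0'|t0']; first by rewrite sube0.
by have -> : t = 0 by apply/eqP; rewrite eq_le t0 andbT.
Qed.

Lemma mitv (a b : R) : measurable (`[a, b] : set R).
Proof. exact: measurable_itv. Qed.

Lemma itv_sub (s T : R) : s <= T -> `[0, s] `<=` (`[0, T] : set R).
Proof. by move=> sT; apply: subset_itvl; rewrite bnd_simp. Qed.

Lemma integrable_sub (s T : R) f : s <= T ->
  mu.-integrable `[0, T] (EFin \o f) -> mu.-integrable `[0, s] (EFin \o f).
Proof. by move=> sT; apply: integrableS => //; exact: itv_sub. Qed.

Lemma int_norm_sub (s T : R) f : s <= T ->
  mu.-integrable `[0, T] (EFin \o f) ->
  \int[mu]_(x in `[0, s]) `|f x| <= \int[mu]_(x in `[0, T]) `|f x|.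
Proof.
move=> sT fi.
have fn := integrable_norm fi.
have fns := integrable_sub sT fn.
rewrite /Rintegral fine_le//; [exact: integrable_fin_num fns|exact: integrable_fin_num fn|].
apply: ge0_subset_integral => //; last exact: itv_sub.
- by apply/measurable_EFinP; have := measurable_int _ fn; move/measurable_EFinP.
Qed.

Lemma int_bound_sub (s T : R) f : s <= T ->
  mu.-integrable `[0, T] (EFin \o f) ->
  `|\int[mu]_(x in `[0, s]) f x| <= \int[mu]_(x in `[0, T]) `|f x|.
Proof.
move=> sT fi; apply: le_trans (int_norm_sub sT fi).
by apply: le_normr_Rintegral => //; exact: integrable_sub fi.
Qed.

Lemma int_measurable (T : R) f : 0 <= T ->
  mu.-integrable `[0, T] (EFin \o f) ->
  measurable_fun `[0, T] (fun s => \int[mu]_(x in `[0, s]) f x).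
Proof.
move=> T0 fi; apply: subspace_continuous_measurable_fun => //.
exact: (parameterized_integral_continuous T0 fi).
Qed.

Lemma bdd_integrable (T : R) (h : R -> R) (M : R) : 0 <= T ->
  measurable_fun `[0, T] h -> (forall s, 0 <= s <= T -> `|h s| <= M) ->
  mu.-integrable `[0, T] (EFin \o h).
Proof.
move=> T0 mh hM; apply: measurable_bounded_integrable => //.
  by rewrite [X in (X < _)%E](_ : _ = T%:E) ?ltry //; exact: (mu_itv0 T0).
exists M; split; rewrite ?num_real // => y My x.
rewrite /= in_itv/= => /andP[x0 xT].
have := hM x; rewrite x0 xT => /(_ isT) hx.
by apply: le_trans hx _; exact: ltW.
Qed.

Section rint.
Variable t : R.
Local Notation D := ([set` `[0, t]] : set R).

Lemma rintD f g : mu.-integrable D (EFin \o f) -> mu.-integrable D (EFin \o g) ->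
  mu.-integrable D (EFin \o (fun x => f x + g x)).
Proof.
move=> fi gi; apply: (eq_integrable _ _ _ _ (integrableD _ fi gi)) => // x _; rewrite /= ?EFinD ?EFinN ?EFinM.
Qed.

Lemma rintN f : mu.-integrable D (EFin \o f) ->
  mu.-integrable D (EFin \o (fun x => - f x)).
Proof.
move=> fi; apply: (eq_integrable _ _ _ _ (integrableN fi)) => // x _; rewrite /= ?EFinD ?EFinN ?EFinM.
Qed.

Lemma rintB f g : mu.-integrable D (EFin \o f) -> mu.-integrable D (EFin \o g) ->
  mu.-integrable D (EFin \o (fun x => f x - g x)).
Proof. by move=> fi gi; apply: rintD fi (rintN gi). Qed.

Lemma rintZ k f : mu.-integrable D (EFin \o f) ->
  mu.-integrable D (EFin \o (fun x => k * f x)).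
Proof.
move=> fi; apply: (eq_integrable _ _ _ _ (integrableZl _ k fi)) => // x _; rewrite /= ?EFinD ?EFinN ?EFinM.
Qed.

Lemma rint0 : mu.-integrable D (EFin \o (fun _ : R => 0 : R)).
Proof. exact: integrable0. Qed.

Lemma rint_sum (I : Type) (r : seq I) (F : I -> R -> R) :
  (forall i, mu.-integrable D (EFin \o F i)) ->
  mu.-integrable D (EFin \o (fun x => \sum_(i <- r) F i x)).
Proof.
move=> Fi; elim: r => [|i r ih].
  have -> : (fun x => \sum_(i <- [::]) F i x) = (fun=> 0).
    by apply/funext => x; rewrite big_nil.
  exact: rint0.
have -> : (fun x => \sum_(j <- i :: r) F j x) = (fun x => F i x + \sum_(j <- r) F j x).
  by apply/funext => x; rewrite big_cons.
exact: rintD.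
Qed.
End rint.

Lemma pow_int (s : R) (k : nat) : 0 <= s ->
  \int[mu]_(x in `[0, s]) (k.+1%:R * x ^+ k) = s ^+ k.+1.
Proof.
rewrite le_eqVlt => /predU1P[<-|s0].
  by rewrite set_itv1 Rintegral_set1 expr0n.
have cf : continuous (fun x : R => k.+1%:R * x ^+ k).
  have -> : (fun x : R => k.+1%:R * x ^+ k) = horner ('X^k *+ k.+1).
    by apply/funext => x; rewrite hornerMn hornerXn mulr_natl.
  exact: continuous_horner.
have cF := @continuous_horner R 'X^(k.+1).
have := @continuous_FTC2 R (fun x : R => k.+1%:R * x ^+ k) (horner 'X^(k.+1)) 0 s s0.
move=> /(_ (@continuous_subspaceT _ _ _ _ cf)) H.
have H' : derivable_oo_LRcontinuous (horner 'X^(k.+1)) 0 s.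
  split.
  - by move=> x _; exact: derivable_horner.
  - exact/cvg_at_right_filter/cF.
  - exact/cvg_at_left_filter/cF.
have H'' : {in `]0, s[, ((horner 'X^(k.+1))^`())%classic =1 (fun x : R => k.+1%:R * x ^+ k)}.
  move=> x _; rewrite -(derive.derivE (R := R)) derivXn /= hornerMn hornerXn mulr_natl.
  by [].
move: (H H' H'') => {}H.
by rewrite /Rintegral H /= !hornerXn expr0n /= subr0.
Qed.

Lemma prim_integrable (f : R -> R) (T : R) : 0 <= T ->
  mu.-integrable `[0, T] (EFin \o f) ->
  mu.-integrable `[0, T] (EFin \o (fun s => \int[mu]_(x in `[0, s]) f x)).
Proof.
move=> T0 fi; apply: (bdd_integrable (M := \int[mu]_(x in `[0, T]) `|f x|)) => //.
  exact: int_measurable.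
by move=> s /andP[_ sT]; exact: int_bound_sub.
Qed.

Lemma cst_integrable (T c : R) : 0 <= T ->
  mu.-integrable `[0, T] (EFin \o (fun _ : R => c)).
Proof.
move=> T0; apply: (bdd_integrable (M := `|c|)) => //.
Qed.


Lemma lim_tail (u v : R^nat) k : cvgn (series u) -> cvgn (series v) ->
  (forall j, `|u j| <= v j) ->
  `|limn (series u) - series u k| <= limn (series v) - series v k.
Proof.
move=> cu cv uv.
apply: (@ler_cvg_to _ \oo _ _ (fun m => `|series u m - series u k|)
  (fun m => series v m - series v k)).
- have H1 : (series u - cst (series u k)) @ \oo --> limn (series u) - series u k.
    by apply: cvgB => //; exact: cvg_cst.
  have H2 := cvg_norm H1.
  exact: H2.
- have H1 : (series v - cst (series v k)) @ \oo --> limn (series v) - series v k.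
    by apply: cvgB => //; exact: cvg_cst.
  exact: H1.
near=> m.
have km : (k <= m)%N by near: m; exists k.
rewrite !sub_series_geq //.
apply: le_trans (ler_norm_sum _ _ _) _.
by apply: ler_sum => j _; exact: uv.
Unshelve. all: by end_near.
Qed.

Lemma tail_cvg0 (v : R^nat) : cvgn (series v) ->
  (fun k => limn (series v) - series v k) @ \oo --> 0.
Proof.
move=> cv; rewrite -(subrr (limn (series v))).
apply: cvgB => //; exact: cvg_cst.
Qed.

Lemma le0_of_cvg (e : R) (w : R^nat) : w @ \oo --> 0 -> (forall k, e <= w k) -> e <= 0.
Proof.
move=> w0 ew.
apply: (@ler_cvg_to _ \oo _ _ (fun _ => e) w) => //; first exact: cvg_cst.
by near=> k; exact: ew.
Unshelve. all: by end_near.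
Qed.

Section Picard.
Variables (n : nat) (A : 'M[R]_n) (g : R -> 'cV[R]_n) (x0 : 'cV[R]_n).

Definition loc_int (h : R -> 'cV[R]_n) := forall t, 0 <= t -> forall i,
  mu.-integrable `[0, t] (EFin \o (fun s => h s i 0)).

Hypothesis gi : loc_int g.

Lemma loc_int_mul h : loc_int h -> loc_int (fun s => A *m h s).
Proof.
move=> hi t t0 i.
have -> : (fun s => (A *m h s) i 0) = (fun s => \sum_(j <- index_enum 'I_n) A i j * h s j 0).
  by apply/funext => s; rewrite mxE.
by apply: rint_sum => j; apply: rintZ; exact: hi.
Qed.

Lemma loc_intD h1 h2 : loc_int h1 -> loc_int h2 -> loc_int (fun s => h1 s + h2 s).
Proof.
move=> h1i h2i t t0 i.
have -> : (fun s => (h1 s + h2 s) i 0) = (fun s => h1 s i 0 + h2 s i 0).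
  by apply/funext => s; rewrite mxE.
by apply: rintD; [exact: h1i|exact: h2i].
Qed.

Lemma loc_intB h1 h2 : loc_int h1 -> loc_int h2 -> loc_int (fun s => h1 s - h2 s).
Proof.
move=> h1i h2i t t0 i.
have -> : (fun s => (h1 s - h2 s) i 0) = (fun s => h1 s i 0 - h2 s i 0).
  by apply/funext => s; rewrite !mxE.
by apply: rintB; [exact: h1i|exact: h2i].
Qed.

Lemma loc_int_cst c : loc_int (fun _ => c).
Proof. by move=> t t0 i; exact: cst_integrable. Qed.

Fixpoint P (k : nat) : R -> 'cV[R]_n :=
  match k with
  | 0 => fun _ => x0
  | k.+1 => fun t => x0 + \col_i \int[mu]_(s in `[0, t]) ((A *m P k s + g s) i 0)
  end.

Lemma P_loc_int k : loc_int (P k).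
Proof.
elim: k => [|k ih]; first exact: loc_int_cst.
move=> t t0 i /=.
have -> : (fun s => (x0 + \col_i \int[mu]_(s0 in `[0, s]) ((A *m P k s0 + g s0) i 0)) i 0)
   = (fun s => x0 i 0 + \int[mu]_(s0 in `[0, s]) ((A *m P k s0 + g s0) i 0)).
  by apply/funext => s; rewrite !mxE.
apply: rintD; first exact: cst_integrable.
apply: prim_integrable => //.
exact: (loc_intD (loc_int_mul ih) gi).
Qed.


Definition Dk (k : nat) (t : R) := P k.+1 t - P k t.

Lemma Dk_loc_int k : loc_int (Dk k).
Proof. exact: loc_intB (P_loc_int _) (P_loc_int _). Qed.

Lemma P_tele k t : P k t = x0 + \sum_(j < k) Dk j t.
Proof.
elim: k => [|k ih]; first by rewrite big_ord0 addr0.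
by rewrite big_ord_recr /= addrA -ih /Dk addrC subrK.
Qed.

Lemma Dk_succ k t : 0 <= t -> forall i,
  Dk k.+1 t i 0 = \int[mu]_(s in `[0, t]) ((A *m Dk k s) i 0).
Proof.
move=> t0 i; rewrite /Dk [P k.+2]/= [P k.+1 t]/= !mxE.
rewrite opprD addrA [x0 i 0 + _]addrC addrK.
rewrite -RintegralB //; last 2 first.
- exact: (loc_intD (loc_int_mul (P_loc_int k.+1)) gi t0 i).
- exact: (loc_intD (loc_int_mul (P_loc_int k)) gi t0 i).
apply: eq_Rintegral => s _.
have aux (u v w : 'cV[R]_n) : (A *m u + w) i 0 - (A *m v + w) i 0 = (A *m (u - v)) i 0.
  rewrite mulmxBr !mxE; set a := (A *m u) i 0; set b := (A *m v) i 0; set c := w i 0.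
  by rewrite opprD addrACA subrr addr0.
exact: aux.
Qed.

Lemma Dk0 t : 0 <= t -> forall i,
  Dk 0 t i 0 = \int[mu]_(s in `[0, t]) ((A *m x0 + g s) i 0).
Proof. by move=> t0 i; rewrite /Dk /= !mxE addrC addKr. Qed.

Definition Kc := \sum_i \sum_j `|A i j|.
Definition Cc (T : R) := \sum_i \int[mu]_(s in `[0, T]) `|(A *m x0 + g s) i 0|.

Lemma Kc_ge0 : 0 <= Kc.
Proof. by apply: sumr_ge0 => i _; apply: sumr_ge0. Qed.

Lemma Cc_ge0 T : 0 <= Cc T.
Proof. by apply: sumr_ge0 => i _; apply: Rintegral_ge0. Qed.

Lemma mv_bound (v : 'cV[R]_n) b : (forall j, `|v j 0| <= b) ->
  forall i, `|(A *m v) i 0| <= Kc * b.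
Proof.
move=> vb i; have b0 : 0 <= b by apply: le_trans (vb i).
rewrite mxE; apply: (le_trans (ler_norm_sum _ _ _)).
apply: (@le_trans _ _ (\sum_j `|A i j| * b)).
  by apply: ler_sum => j _; rewrite normrM ler_wpM2l.
rewrite -mulr_suml ler_wpM2r // /Kc [X in _ <= X](bigD1 i) //= lerDl.
by apply: sumr_ge0 => i' _; apply: sumr_ge0.
Qed.

Lemma powk_integrable (s : R) k :
  mu.-integrable `[0, s] (EFin \o (fun x : R => k.+1%:R * x ^+ k)).
Proof.
apply: continuous_compact_integrable; first exact: segment_compact.
apply: continuous_subspaceT.
have -> : (fun x : R => k.+1%:R * x ^+ k) = horner ('X^k *+ k.+1).
  by apply/funext => x; rewrite hornerMn hornerXn mulr_natl.
exact: continuous_horner.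
Qed.

Lemma Dk_bound T k s i : 0 <= s <= T ->
  `|Dk k s i 0| <= Cc T * (Kc * s) ^+ k / k`!%:R.
Proof.
elim: k s i => [|k ih] s i /andP[s0 sT].
  rewrite expr0 fact0 divr1 mulr1 Dk0 //.
  have T0 : 0 <= T by apply: le_trans sT.
  apply: le_trans (int_bound_sub sT (loc_intD (loc_int_cst _) gi T0 i)) _.
  rewrite /Cc (bigD1 i) //= lerDl.
  by apply: sumr_ge0 => j _; apply: Rintegral_ge0.
rewrite Dk_succ //.
set c := Kc ^+ k.+1 * Cc T / k.+1`!%:R.
have iA := loc_int_mul (Dk_loc_int k) s0 i.
apply: le_trans (le_normr_Rintegral _ iA) _ => //.
apply: (@le_trans _ _ (\int[mu]_(x in `[0, s]) (c * (k.+1%:R * x ^+ k)))).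
  apply: le_Rintegral => //.
  - exact: integrable_norm.
  - exact: rintZ (powk_integrable _ _).
  move=> x; rewrite /= in_itv /= => /andP[x0' xs].
  apply: le_trans (mv_bound (b := Cc T * (Kc * x) ^+ k / k`!%:R) _ i) _.
    move=> j; apply: ih; rewrite x0' /=; exact: le_trans xs sT.
  rewrite /c factS natrM exprMn.
  have kf : k`!%:R != 0 :> R by rewrite pnatr_eq0 -lt0n fact_gt0.
  have kS : k.+1%:R != 0 :> R by rewrite pnatr_eq0.
  rewrite le_eqVlt; apply/orP; left; apply/eqP; rewrite exprS.
  move: kf kS; set a := k`!%:R; set b := k.+1%:R; set z := Kc ^+ k; set w := x ^+ k => kf kS.
  by field; rewrite kf /= addrC natr1.
have -> : \int[mu]_(x in `[0, s]) (c * (k.+1%:R * x ^+ k)) =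
    c * \int[mu]_(x in `[0, s]) (k.+1%:R * x ^+ k).
  by apply: RintegralZl => //; exact: powk_integrable.
rewrite pow_int // /c exprMn.
rewrite le_eqVlt; apply/orP; left; apply/eqP.
rewrite factS natrM exprS.
have kf : k`!%:R != 0 :> R by rewrite pnatr_eq0 -lt0n fact_gt0.
move: kf; set a := k`!%:R; set b := k.+1%:R; set z := Kc ^+ k; set w := s ^+ k => kf.
by field; rewrite kf /= addrC natr1.
Qed.

Definition bT (T : R) : R^nat := fun k => Cc T * (Kc * T) ^+ k / k`!%:R.

Lemma bT_ge0 T k : 0 <= T -> 0 <= bT T k.
Proof.
move=> T0; rewrite /bT; apply: divr_ge0; last exact: ler0n.
by apply: mulr_ge0; [exact: Cc_ge0|apply: exprn_ge0; apply: mulr_ge0 => //; exact: Kc_ge0].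
Qed.

Lemma bT_cvg T : cvgn (series (bT T)).
Proof.
have -> : bT T = Cc T *: exp_coeff (Kc * T).
  by apply/funext => k; rewrite /bT /exp_coeff /= -mulrA.
exact: (@is_cvg_seriesZ R (exp_coeff (Kc * T)) (Cc T) (is_cvg_series_exp_coeff _)).
Qed.

Lemma Dk_bT T k s i : 0 <= s <= T -> `|Dk k s i 0| <= bT T k.
Proof.
move=> /andP[s0 sT]; apply: le_trans (@Dk_bound T k s i _) _; first by rewrite s0 sT.
rewrite /bT ler_wpM2r ?invr_ge0 ?ler0n // ler_wpM2l ?Cc_ge0 //.
rewrite lerXn2r // ?nnegrE; try apply: mulr_ge0 => //; try exact: Kc_ge0.
  by apply: le_trans sT.
by rewrite ler_wpM2l // Kc_ge0.
Qed.

Lemma Dser_cvg T s i : 0 <= s <= T -> cvgn (series (fun k => Dk k s i 0)).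
Proof.
move=> sT; apply: normed_cvg.
apply: (@series_le_cvg _ _ (bT T)).
- by move=> k; exact: normr_ge0.
- move=> k; apply: bT_ge0; case/andP: sT => s0 sT; exact: le_trans sT.
- by move=> k; exact: Dk_bT.
- exact: bT_cvg.
Qed.

Definition X (t : R) : 'cV[R]_n := x0 + \col_i limn (series (fun k => Dk k t i 0)).

Lemma P_series k t i : P k t i 0 = x0 i 0 + series (fun j => Dk j t i 0) k.
Proof. by rewrite P_tele mxE summxE seriesEord. Qed.

Lemma X_tail T s i k : 0 <= s <= T ->
  `|X s i 0 - P k s i 0| <= limn (series (bT T)) - series (bT T) k.
Proof.
move=> sT; rewrite P_series /X !mxE opprD addrACA subrr add0r.
apply: lim_tail; [exact: Dser_cvg sT|exact: bT_cvg|].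
by move=> j; exact: Dk_bT.
Qed.

Definition tau (T : R) (k : nat) := limn (series (bT T)) - series (bT T) k.

Lemma P_cvg_X s i : 0 <= s -> (fun m => P m s i 0) @ \oo --> X s i 0.
Proof.
move=> s0.
have -> : (fun m => P m s i 0) = (fun m => x0 i 0 + series (fun j => Dk j s i 0) m).
  by apply/funext => m; rewrite P_series.
rewrite /X !mxE; apply: cvgD; first exact: cvg_cst.
by apply: (@Dser_cvg s); rewrite s0 lexx.
Qed.

Lemma X_loc_int : loc_int X.
Proof.
move=> T T0 i.
apply: (bdd_integrable (M := `|x0 i 0| + tau T 0)) => //.
  apply: (@measurable_fun_cvg _ _ _ _ (fun m s => P m s i 0)).
  - move=> m; have := P_loc_int m T0 i.
    by move/measurable_int/measurable_EFinP.
  - by move=> s; rewrite /= in_itv /= => /andP[s0 _]; exact: P_cvg_X.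
move=> s sT.
have := X_tail i 0 sT; rewrite /= -/(tau T 0) => H.
rewrite -[X s i 0](subrK (x0 i 0)) addrC.
by apply: le_trans (ler_normD _ _) _; rewrite lerD2l.
Qed.

Lemma X_eq t : 0 <= t -> forall i,
  X t i 0 = x0 i 0 + \int[mu]_(s in `[0, t]) ((A *m X s + g s) i 0).
Proof.
move=> t0 i; apply/eqP; rewrite -subr_eq0 -normr_le0.
set e := X t i 0 - _.
apply: (@le0_of_cvg _ (fun k => tau t k.+1 + Kc * t * tau t k)).
  rewrite -[0 : R](addr0 0) -[X in _ + X](mulr0 (Kc * t)).
  apply: cvgD.
    have H := tail_cvg0 (@bT_cvg t).
    by rewrite -(cvg_shiftS (fun k => tau t k)) in H.
  apply: cvgMr; exact: tail_cvg0 (@bT_cvg t).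
move=> k.
have iX := loc_intD (loc_int_mul X_loc_int) gi t0 i.
have iP := loc_intD (loc_int_mul (P_loc_int k)) gi t0 i.
have iD := loc_int_mul (loc_intB X_loc_int (P_loc_int k)) t0 i.
have HP : P k.+1 t i 0 = x0 i 0 + \int[mu]_(s in `[0, t]) ((A *m P k s + g s) i 0).
  by rewrite /= !mxE.
have Hd : \int[mu]_(s in `[0, t]) ((A *m X s + g s) i 0) -
          \int[mu]_(s in `[0, t]) ((A *m P k s + g s) i 0) =
          \int[mu]_(s in `[0, t]) ((A *m (X s - P k s)) i 0).
  rewrite -RintegralB //; apply: eq_Rintegral => s _.
  by rewrite mulmxBr !mxE opprD addrACA subrr addr0.
have -> : e = (X t i 0 - P k.+1 t i 0) -
    \int[mu]_(s in `[0, t]) ((A *m (X s - P k s)) i 0).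
  rewrite -Hd HP /e. set a := X t i 0. set b := \int[mu]_(s in `[0, t]) ((A *m X s + g s) i 0). set c := \int[mu]_(s in `[0, t]) ((A *m P k s + g s) i 0).
  ring.
apply: le_trans (ler_normB _ _) _.
apply: lerD; first by apply: X_tail; rewrite t0 lexx.
apply: le_trans (le_normr_Rintegral _ iD) _ => //.
apply: (@le_trans _ _ (\int[mu]_(s in `[0, t]) (Kc * tau t k))).
  apply: le_Rintegral => //; [exact: integrable_norm|exact: cst_integrable|].
  move=> s; rewrite /= in_itv /= => /andP[s0 st].
  apply: mv_bound => j.
  have := @X_tail t s j k; rewrite s0 st /tau => /(_ isT).
  by rewrite !mxE.
rewrite (Rintegral_cst mu) //.
rewrite [fine _](_ : _ = t); first by rewrite mulrAC.
rewrite -[t in RHS]/(fine t%:E); congr fine; exact: mu_itv0.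
Qed.
End Picard.
End Aux.

Lemma sol_exists (R : realType) n m (A : 'M[R]_n) (B : 'M[R]_(n, m)) x0
  (U : set 'cV[R]_m) u :
  admissible U u -> exists x, is_solution A B x0 u x.
Proof.
case=> _ [_ ui].
have gi : loc_int (fun s => B *m u s).
  move=> t t0 i.
  have -> : (fun s => (B *m u s) i 0) =
      (fun s => \sum_(j <- index_enum 'I_m) B i j * u s j 0).
    by apply/funext => s; rewrite mxE.
  by apply: rint_sum => j; apply: rintZ; exact: ui.
exists (X A (fun s => B *m u s) x0) => t t0 i; split.
- exact: (loc_intD (loc_int_mul A (X_loc_int A x0 gi)) gi t0 i).
- exact: X_eq.
Qed.

Section Quad.
Variables (R : realType) (p : nat) (Q : 'M[R]_p).
Hypothesis Qsym : Q^T = Q.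
Hypothesis Qpd : forall v : 'cV[R]_p, v != 0 -> 0 < (v^T *m Q *m v) 0 0.

Definition bf (v w : 'cV[R]_p) := (v^T *m Q *m w) 0 0.

Lemma bfDl v1 v2 w : bf (v1 + v2) w = bf v1 w + bf v2 w.
Proof. by rewrite /bf linearD /= !mulmxDl mxE. Qed.

Lemma bfDr v w1 w2 : bf v (w1 + w2) = bf v w1 + bf v w2.
Proof. by rewrite /bf mulmxDr mxE. Qed.

Lemma bfZl r v w : bf (r *: v) w = r * bf v w.
Proof. by rewrite /bf linearZ /= -!scalemxAl mxE. Qed.

Lemma bfZr r v w : bf v (r *: w) = r * bf v w.
Proof. by rewrite /bf -scalemxAr mxE. Qed.

Lemma bf0r v : bf v 0 = 0.
Proof. by rewrite /bf mulmx0 mxE. Qed.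

Lemma bf_sym v w : bf v w = bf w v.
Proof.
rewrite /bf; have -> : (v^T *m Q *m w) 0 0 = ((v^T *m Q *m w)^T) 0 0 by rewrite [RHS]mxE.
by rewrite !trmx_mul !trmxK Qsym mulmxA.
Qed.

Lemma bf_psd v : 0 <= bf v v.
Proof.
have [->|v0] := eqVneq v 0; first by rewrite bf0r.
by apply: ltW; exact: Qpd.
Qed.

Lemma bf_CS v w : bf v w ^+ 2 <= bf v v * bf w w.
Proof.
have [->|w0] := eqVneq w 0; first by rewrite !bf0r expr0n mulr0.
have c0 : 0 < bf w w by exact: Qpd.
set a := bf v v; set b := bf v w; set c := bf w w.
set s := b / c.
have H := bf_psd (v + (- s) *: w).
rewrite !bfDl !bfDr !bfZl !bfZr (bf_sym w v) -/a -/b -/c in H.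
have sc : s * c = b by rewrite /s divfK // gt_eqF.
have e : - s * (- s * c) = s * b by rewrite !mulNr mulrN opprK sc.
rewrite e in H.
have H2 : 0 <= (a - s * b) * c by apply: mulr_ge0 => //; [lra|exact: ltW].
have e2 : s * b * c = b * b by rewrite -mulrA [b * c]mulrC mulrA sc.
rewrite mulrBl e2 in H2; rewrite expr2; lra.
Qed.

Lemma bf_tri v w : Num.sqrt (bf (v + w) (v + w)) <= Num.sqrt (bf v v) + Num.sqrt (bf w w).
Proof.
have a0 := bf_psd v; have c0 := bf_psd w.
rewrite -[X in _ <= X]ger0_norm ?addr_ge0 ?sqrtr_ge0 // -sqrtr_sqr ler_wsqrtr //.
rewrite !bfDl !bfDr (bf_sym w v) sqrrD !sqr_sqrtr //.
have : bf v w <= Num.sqrt (bf v v) * Num.sqrt (bf w w).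
  rewrite -sqrtrM //; apply: le_trans (ler_norm _) _.
  by rewrite -sqrtr_sqr ler_wsqrtr // bf_CS.
lra.
Qed.

Variables (E : 'M[R]_p) (lam : 'I_p -> R).
Hypothesis EtE : E^T *m E = 1%:M.
Hypothesis HQ : E^T *m Q *m E = diag_mx (\row_i lam i).

Lemma bf_diag e : bf e e = \sum_i lam i * ((E^T *m e) i 0) ^+ 2.
Proof.
have EEt : E *m E^T = 1%:M by apply: mulmx1C.
have -> : bf e e = ((E^T *m e)^T *m (E^T *m Q *m E) *m (E^T *m e)) 0 0.
  rewrite trmx_mul trmxK /bf.
  have -> : e^T *m E *m (E^T *m Q *m E) *m (E^T *m e) =
            e^T *m (E *m E^T) *m Q *m (E *m E^T) *m e by rewrite !mulmxA.
  by rewrite EEt !mulmx1.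
set z := E^T *m e.
rewrite HQ mul_mx_diag mxE; apply: eq_bigr => i _.
by rewrite !mxE; ring.
Qed.

Lemma lam_ge0 j : 0 <= lam j.
Proof.
have := bf_psd (E *m delta_mx j 0); rewrite bf_diag mulmxA EtE mul1mx.
rewrite (bigD1 j) //= big1 ?addr0; first by rewrite mxE !eqxx /= expr1n mulr1.
by move=> i ij; rewrite mxE (negbTE ij) /= expr0n /= mulr0.
Qed.

Lemma qf_bound (delta : 'I_p -> R) (e : 'cV[R]_p) :
  (forall j, `|e j 0| <= delta j) ->
  bf e e <= \sum_(i < p) lam i * (\sum_(j < p) `|E j i| * delta j) ^+ 2.
Proof.
move=> ed; rewrite bf_diag; apply: ler_sum => i _.
apply: ler_wpM2l; first exact: lam_ge0.
set z := (E^T *m e) i 0; set b := \sum_(j < p) `|E j i| * delta j.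
have zb : `|z| <= b.
  rewrite /z mxE; apply: le_trans (ler_norm_sum _ _ _) _.
  by apply: ler_sum => j _; rewrite mxE normrM ler_wpM2l.
have h1 : z <= b by apply: le_trans (ler_norm z) zb.
have h2 : - z <= b by apply: le_trans zb; rewrite -normrN ler_norm.
nra.
Qed.
End Quad.

Lemma sqrt_le_sq (R : realType) (q b : R) : 0 <= b -> (q <= b ^+ 2) = (Num.sqrt q <= b).
Proof.
move=> b0; rewrite -(@ler_sqrt _ q (b ^+ 2)) ?sqrtr_sqr ?ger0_norm //.
exact: exprn_ge0.
Qed.

Unset Implicit Arguments.

Theorem lemma3 (R : realType) (n k m p : nat)
  (A : 'M[R]_n) (B : 'M[R]_(n, m)) (C : 'M[R]_(p, n))
  (Ar : 'M[R]_k) (Br : 'M[R]_(k, m)) (Cr : 'M[R]_(p, k))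
  (T : 'M[R]_(k, n)) (X0 : set 'cV[R]_n) (U : set 'cV[R]_m)
  (delta : 'I_p -> R)
  (a : 'cV[R]_p) (Rad : R) (Q : 'M[R]_p) (E : 'M[R]_p) (lam : 'I_p -> R) :
  (forall j, 0 < delta j) ->
  (forall x0 u x xr t, X0 x0 -> admissible U u ->
     is_solution A B x0 u x -> is_solution Ar Br (T *m x0) u xr -> 0 <= t ->
     forall j : 'I_p, `|(C *m x t) j 0 - (Cr *m xr t) j 0| <= delta j) ->
  0 < Rad ->
  Q^T = Q ->
  (forall v : 'cV[R]_p, v != 0 -> 0 < (v^T *m Q *m v) 0 0) ->
  E^T *m E = 1%:M ->
  E^T *m Q *m E = diag_mx (\row_i lam i) ->
  let DeltaR := Num.sqrt (\sum_(i < p) lam i * (\sum_(j < p) `|E j i| * delta j) ^+ 2) in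
  DeltaR <= Rad ->
  let SMn := [set y | qform Q a y <= Rad ^+ 2] in
  let SMk := [set y | qform Q a y <= (Rad - DeltaR) ^+ 2] in
  let UMk := [set y | qform Q a y > (Rad + DeltaR) ^+ 2] in
  forall tf : R, 0 <= tf ->
    (reach_set Ar Br Cr [set T *m x0 | x0 in X0] U tf `&` ~` SMk = set0 ->
       reach_set A B C X0 U tf `&` ~` SMn = set0) /\
    (reach_set Ar Br Cr [set T *m x0 | x0 in X0] U tf `&` UMk !=set0 ->
       reach_set A B C X0 U tf `&` ~` SMn !=set0).
Proof.
move=> hdelta Hdelta Rad0 Qsym Qpd EtE HQ DeltaR HDR SMn SMk UMk tf tf0.
have D0 : 0 <= DeltaR by apply: sqrtr_ge0.
have bnd (e : 'cV[R]_p) : (forall j, `|e j 0| <= delta j) -> Num.sqrt (bf Q e e) <= DeltaR.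
  move=> ed; rewrite -sqrt_le_sq //.
  rewrite /DeltaR sqr_sqrtr; first exact: (qf_bound Qpd EtE HQ ed).
  apply: sumr_ge0 => i _; apply: mulr_ge0; last exact: sqr_ge0.
  exact: (lam_ge0 Qpd EtE HQ).
have close (y yr : 'cV[R]_p) : (forall j, `|y j 0 - yr j 0| <= delta j) ->
    Num.sqrt (qform Q a y) <= Num.sqrt (qform Q a yr) + DeltaR.
  move=> hy; rewrite /qform.
  have -> : y - a = (y - yr) + (yr - a) by rewrite addrA subrK.
  apply: le_trans (bf_tri Qsym Qpd _ _) _.
  rewrite addrC lerD2l; apply: bnd => j; rewrite !mxE; exact: hy.
split.
- move=> Hk; apply/seteqP; split => // y [[x0 [u [x [t [X0x adm sol /andP[t0 ttf] ye]]]]] notS].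
  have [xr solr] := sol_exists Ar Br (T *m x0) adm.
  have inR : reach_set Ar Br Cr [set T *m x0 | x0 in X0] U tf (Cr *m xr t).
    by exists (T *m x0), u, xr, t; split => //; [exists x0|rewrite t0 ttf].
  have nS : ~ SMk (Cr *m xr t).
    rewrite /SMk /= => hk; apply: notS; rewrite /SMn /=.
    have RD : 0 <= Rad - DeltaR by rewrite subr_ge0.
    rewrite sqrt_le_sq // in hk; rewrite sqrt_le_sq; last exact: ltW.
    apply: le_trans (close y (Cr *m xr t) _) _.
      by move=> j; rewrite ye; exact: (Hdelta x0 u x xr t X0x adm sol solr t0 j).
    by rewrite -lerBrDr.
  have : (reach_set Ar Br Cr [set T *m x0 | x0 in X0] U tf `&` ~` SMk) (Cr *m xr t).
    by split.
  by rewrite Hk.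
- move=> [yr [[z [u [xr [t [[x0 X0x <-] adm solr /andP[t0 ttf] ye]]]]] Uy]].
  have [x sol] := sol_exists A B x0 adm.
  exists (C *m x t); split.
    by exists x0, u, x, t; split => //; rewrite t0 ttf.
  rewrite /SMn /= => hn.
  move: Uy; rewrite /UMk /=; apply/negP; rewrite -leNgt.
  have RD : 0 <= Rad + DeltaR by apply: addr_ge0 => //; exact: ltW.
  rewrite sqrt_le_sq //; rewrite sqrt_le_sq in hn; last exact: ltW.
  apply: le_trans (close yr (C *m x t) _) _; last by rewrite lerD2r.
  move=> j; rewrite ye distrC; exact: (Hdelta x0 u x xr t X0x adm sol solr t0 j).
Qed.
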